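(* Let $G$ be a finite group, $H$ a nontrivial core-free subgroup, $\Omega=G/H$, $n=|G:H|$ and $\chi$ the permutation character of $G$ on $\Omega$. For a positive integer $t$ let $$Q(G,t)=\sum_{i=1}^k|x_i^G|\left(\frac{\chi(x_i)}{n}\right)^t,$$ where $x_1,\dots,x_k$ represent the conjugacy classes of elements of prime order in $G$. If $Q(G,t)<1$ then $d_G(H)\leqslant 2t-1$; in particular, if $Q(G,2)<1$ then $d_G(H)=3$.
   Context: Depth: for a finite group $G$, a subgroup $H$ and $m\geqslant 1$, let $(\mathbb{C}G)^{\otimes m}=\mathbb{C}G\otimes_{\mathbb{C}H}\cdots\otimes_{\mathbb{C}H}\mathbb{C}G$ ($m$ factors). For $n\geqslant 1$, the inclusion $\mathbb{C}H\subseteq\mathbb{C}G$ has depth $2n$ if $(\mathbb{C}G)^{\otimes(n+1)}$ is isomorphic, as a $(\mathbb{C}G,\mathbb{C}H)$-bimodule, to a direct summand of $\bigoplus_{i=1}^k(\mathbb{C}G)^{\otimes n}$ for some $k\geqslant 1$; it has depth $2n+1$ if the same holds for $(\mathbb{C}H,\mathbb{C}H)$-bimodules; it has depth $1$ if $\mathbb{C}G$ is isomorphic as a $(\mathbb{C}H,\mathbb{C}H)$-bimodule to a direct summand of $\bigoplus_{i=1}^k\mathbb{C}H$ for some $k\geqslant1$. The depth $d_G(H)$ is the least positive integer $n$ such that the inclusion has depth $n$. $H$ is core-free if $\bigcap_{g\in G}H^g=1$. *)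

(* Defs.v *)
From HB Require Import structures.
From mathcomp Require Import all_boot all_order all_algebra all_fingroup all_field.
Set Implicit Arguments. Unset Strict Implicit. Unset Printing Implicit Defensive.
Import GRing.Theory Num.Theory.
Local Open Scope ring_scope.

(* A finite set S : {set T} together with a map act : T -> T yields    *)
(* the (row-convention) matrix of the linear extension of act on CS,   *)
Definition actmx (T : finType) (S : {set T}) (act : T -> T) : 'M[algC]_#|S| :=
  \matrix_(i < #|S|, j < #|S|) ((act (enum_val i) == enum_val j)%:R : algC).

(* M : CS -> CS' (v |-> v *m M) is a (CA,CB)-bimodule homomorphism, where
   a in A acts on the left via lS a / lS' a and b in B acts on the right
   via rS ^~ b / rS' ^~ b. *)
Definition is_bihom (gT : finGroupType) (A B : {set gT})
  (T : finType) (S : {set T}) (lS : gT -> T -> T) (rS : T -> gT -> T)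
  (T' : finType) (S' : {set T'}) (lS' : gT -> T' -> T') (rS' : T' -> gT -> T')
  (M : 'M[algC]_(#|S|, #|S'|)) : Prop :=
  (forall a, a \in A -> actmx S (lS a) *m M = M *m actmx S' (lS' a)) /\
  (forall b, b \in B -> actmx S (rS^~ b) *m M = M *m actmx S' (rS'^~ b)).

(* CS is isomorphic, as a (CA,CB)-bimodule, to a direct summand of the
   direct sum of k copies of CS': there are bimodule maps
   i = (f_1,...,f_k) : CS -> (CS')^k and p = (p_1;...;p_k) : (CS')^k -> CS
   with p o i = id. *)
Definition is_summand_of_copies (gT : finGroupType) (A B : {set gT})
  (T : finType) (S : {set T}) (lS : gT -> T -> T) (rS : T -> gT -> T)
  (T' : finType) (S' : {set T'}) (lS' : gT -> T' -> T') (rS' : T' -> gT -> T')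
  (k : nat) : Prop :=
  exists (f : 'I_k -> 'M[algC]_(#|S|, #|S'|)) (p : 'I_k -> 'M[algC]_(#|S'|, #|S|)),
    [/\ forall j, is_bihom A B lS rS lS' rS' (f j),
        forall j, is_bihom A B lS' rS' lS rS (p j)
      & \sum_(j < k) (f j *m p j) = 1%:M].

(* The m-fold tensor power CG (x)_{CH} ... (x)_{CH} CG.                *)
(* It is the linearization of G x_H G x_H ... x_H G, i.e. of the set   *)
(* of orbits of H^(m-1) on G^m acting by                               *)
(*   (t_0,...,t_{m-1}) |-> (t_0 h_1, h_1^-1 t_1 h_2, ..., h_{m-1}^-1 t_{m-1}) *)
(* (the class of (t_0,...,t_{m-1}) is the basis vector                 *)
(* t_0 (x) ... (x) t_{m-1}); G acts on the left on the first factor,   *)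
(* H on the right on the last one.                                     *)
Section TensorPower.
Variables (gT : finGroupType) (G H : {set gT}) (m : nat).

Definition twist (h : {ffun 'I_m.+1 -> gT}) (t : {ffun 'I_m -> gT}) :
    {ffun 'I_m -> gT} :=
  [ffun i : 'I_m => ((h (widen_ord (leqnSn m) i))^-1 * t i * h (lift ord0 i))%g].

Definition twisters : {set {ffun 'I_m.+1 -> gT}} :=
  [set h : {ffun 'I_m.+1 -> gT} |
     [&& h ord0 == 1%g, h ord_max == 1%g & [forall i, h i \in H]]].

Definition tclass (t : {ffun 'I_m -> gT}) : {set {ffun 'I_m -> gT}} :=
  [set twist h t | h in twisters].

Definition tbase : {set {ffun 'I_m -> gT}} :=
  [set t : {ffun 'I_m -> gT} | [forall i, t i \in G]].

Definition tpow : {set {set {ffun 'I_m -> gT}}} := [set tclass t | t in tbase].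

Definition tlmul (g : gT) (t : {ffun 'I_m -> gT}) : {ffun 'I_m -> gT} :=
  [ffun i : 'I_m => if val i == 0%N then (g * t i)%g else t i].

Definition trmul (t : {ffun 'I_m -> gT}) (h : gT) : {ffun 'I_m -> gT} :=
  [ffun i : 'I_m => if val i == m.-1 then (t i * h)%g else t i].

Definition tpow_l (g : gT) (c : {set {ffun 'I_m -> gT}}) := tlmul g @: c.
Definition tpow_r (c : {set {ffun 'I_m -> gT}}) (h : gT) := (trmul ^~ h) @: c.

End TensorPower.

Definition lmulg (gT : finGroupType) (g x : gT) : gT := (g * x)%g.
Definition rmulg (gT : finGroupType) (x g : gT) : gT := (x * g)%g.

Definition has_depth (gT : finGroupType) (G H : {group gT}) (d : nat) : Prop :=
  (* depth 1: CG | (CH)^k as (CH,CH)-bimodules *)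
  (d = 1%N /\ exists2 k, (0 < k)%N &
     @is_summand_of_copies gT H H gT G (@lmulg gT) (@rmulg gT)
                              gT H (@lmulg gT) (@rmulg gT) k) \/
  (* depth 2n: CG^(n+1) | (CG^n)^k as (CG,CH)-bimodules *)
  (exists n, [/\ (0 < n)%N, d = n.*2 & exists2 k, (0 < k)%N &
     @is_summand_of_copies gT G H
       _ (tpow G H n.+1) (@tpow_l gT n.+1) (@tpow_r gT n.+1)
       _ (tpow G H n) (@tpow_l gT n) (@tpow_r gT n) k]) \/
  (* depth 2n+1: CG^(n+1) | (CG^n)^k as (CH,CH)-bimodules *)
  (exists n, [/\ (0 < n)%N, d = n.*2.+1 & exists2 k, (0 < k)%N &
     @is_summand_of_copies gT H H
       _ (tpow G H n.+1) (@tpow_l gT n.+1) (@tpow_r gT n.+1)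
       _ (tpow G H n) (@tpow_l gT n) (@tpow_r gT n) k]).

Definition permchar (gT : finGroupType) (G H : {set gT}) (x : gT) : nat :=
  #|[set Hy in rcosets H G | (Hy :* x)%g == Hy]|.

Definition Qsum (gT : finGroupType) (G H : {group gT}) (t : nat) : rat :=
  \sum_(xG in classes G | prime #[repr xG]%g)
     (#|xG|%:R * ((permchar G H (repr xG))%:R / (#|G : H|%g)%:R) ^+ t).

(* Main.v *)
Require Import Defs.
From HB Require Import structures.
From mathcomp Require Import all_boot all_order all_algebra all_fingroup all_field.
From mathcomp Require Import all_solvable.
From mathcomp Require classfun.
Import GRing.Theory Num.Theory.
Import Order.TTheory.
Set Implicit Arguments. Unset Strict Implicit. Unset Printing Implicit Defensive.

Section Part1.

Section TP.
Variables (gT : finGroupType) (G H : {group gT}) (m : nat).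
Local Open Scope group_scope.

Lemma tlmul1 (t : {ffun 'I_m -> gT}) : tlmul 1 t = t.
Proof. by apply/ffunP=> i; rewrite ffunE; case: ifP; rewrite ?mul1g. Qed.

Lemma tlmulM a b (t : {ffun 'I_m -> gT}) : tlmul (a * b) t = tlmul a (tlmul b t).
Proof. by apply/ffunP=> i; rewrite !ffunE; case: ifP; rewrite ?mulgA. Qed.

Lemma trmul1 (t : {ffun 'I_m -> gT}) : trmul t 1 = t.
Proof. by apply/ffunP=> i; rewrite ffunE; case: ifP; rewrite ?mulg1. Qed.

Lemma trmulM a b (t : {ffun 'I_m -> gT}) : trmul t (a * b) = trmul (trmul t a) b.
Proof. by apply/ffunP=> i; rewrite !ffunE; case: ifP; rewrite ?mulgA. Qed.

Lemma tlrmul a b (t : {ffun 'I_m -> gT}) : tlmul a (trmul t b) = trmul (tlmul a t) b.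
Proof. by apply/ffunP=> i; rewrite !ffunE; do 2 case: ifP; rewrite ?mulgA. Qed.

Lemma tpow_l1 (c : {set {ffun 'I_m -> gT}}) : tpow_l 1 c = c.
Proof. by rewrite /tpow_l (eq_imset _ tlmul1) imset_id. Qed.

Lemma tpow_lM a b (c : {set {ffun 'I_m -> gT}}) : tpow_l (a * b) c = tpow_l a (tpow_l b c).
Proof. by rewrite /tpow_l -imset_comp; apply: eq_imset => t; rewrite /= tlmulM. Qed.

Lemma tpow_r1 (c : {set {ffun 'I_m -> gT}}) : tpow_r c 1 = c.
Proof. by rewrite /tpow_r (eq_imset _ (@trmul1)) imset_id. Qed.

Lemma tpow_rM a b (c : {set {ffun 'I_m -> gT}}) : tpow_r c (a * b) = tpow_r (tpow_r c a) b.
Proof. by rewrite /tpow_r -imset_comp; apply: eq_imset => t; rewrite /= trmulM. Qed.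

Lemma tpow_lr a b (c : {set {ffun 'I_m -> gT}}) : tpow_l a (tpow_r c b) = tpow_r (tpow_l a c) b.
Proof.
by rewrite /tpow_l /tpow_r -!imset_comp; apply: eq_imset => t; rewrite /= tlrmul.
Qed.

Lemma twist_tlmul k a (t : {ffun 'I_m -> gT}) : k \in twisters H m ->
  tlmul a (twist k t) = twist k (tlmul a t).
Proof.
rewrite inE => /and3P[/eqP k0 _ _]; apply/ffunP=> i; rewrite !ffunE.
case: ifP => // /eqP i0.
have -> : widen_ord (leqnSn m) i = ord0 by apply: val_inj.
by rewrite k0 invg1 !mul1g mulgA.
Qed.

Lemma twist_trmul k a (t : {ffun 'I_m -> gT}) : k \in twisters H m ->
  trmul (twist k t) a = twist k (trmul t a).
Proof.
rewrite inE => /and3P[_ /eqP km _]; apply/ffunP=> i; rewrite !ffunE.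
case: ifP => // /eqP i0.
have -> : lift ord0 i = ord_max.
  by apply: val_inj; rewrite /= /bump /= i0 add1n prednK // (leq_ltn_trans _ (ltn_ord i)).
by rewrite km !mulg1 mulgA.
Qed.

Lemma tclass_l a (t : {ffun 'I_m -> gT}) : tpow_l a (tclass H t) = tclass H (tlmul a t).
Proof.
rewrite /tpow_l /tclass -imset_comp; apply: eq_in_imset => k kT.
by rewrite /= twist_tlmul.
Qed.

Lemma tclass_r a (t : {ffun 'I_m -> gT}) : tpow_r (tclass H t) a = tclass H (trmul t a).
Proof.
rewrite /tpow_r /tclass -imset_comp; apply: eq_in_imset => k kT.
by rewrite /= twist_trmul.
Qed.

Lemma twisters1 : [ffun _ => 1] \in twisters H m.
Proof. by rewrite inE !ffunE !eqxx /=; apply/forallP => i; rewrite ffunE group1. Qed.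

Lemma twist1 (t : {ffun 'I_m -> gT}) : twist [ffun _ => 1] t = t.
Proof. by apply/ffunP=> i; rewrite !ffunE invg1 mul1g mulg1. Qed.

Lemma tclass_self (t : {ffun 'I_m -> gT}) : t \in tclass H t.
Proof. by apply/imsetP; exists [ffun _ => 1]; rewrite ?twisters1 ?twist1. Qed.

Hypothesis sHG : H \subset G.

Lemma tpow_lS a (c : {set {ffun 'I_m -> gT}}) : a \in G -> c \in tpow G H m -> tpow_l a c \in tpow G H m.
Proof.
move=> aG /imsetP[t tB ->]; rewrite tclass_l; apply: imset_f.
move: tB; rewrite !inE => /forallP tB; apply/forallP => i; rewrite ffunE.
by case: ifP; rewrite ?groupM.
Qed.

Lemma tpow_rS a (c : {set {ffun 'I_m -> gT}}) : a \in H -> c \in tpow G H m -> tpow_r c a \in tpow G H m.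
Proof.
move=> /(subsetP sHG) aG /imsetP[t tB ->]; rewrite tclass_r; apply: imset_f.
move: tB; rewrite !inE => /forallP tB; apply/forallP => i; rewrite ffunE.
by case: ifP; rewrite ?groupM.
Qed.

End TP.

End Part1.

Section Part2.
Local Open Scope ring_scope.

Lemma sum_pick (U : finType) (A : {pred U}) (u : U) (F : U -> algC) :
  u \in A -> \sum_(w in A) (u == w)%:R * F w = F u.
Proof.
move=> uA; rewrite (bigD1 u) //= eqxx mul1r big1 ?addr0 // => w /andP[_ nw].
by rewrite eq_sym (negPf nw) mul0r.
Qed.

Definition mx_of (T T' : finType) (S : {set T}) (S' : {set T'}) (F : T -> T' -> algC) :
  'M[algC]_(#|S|, #|S'|) := \matrix_(i, j) F (enum_val i) (enum_val j).

Lemma actmx_mx_of (T T' : finType) (S : {set T}) (S' : {set T'}) act F :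
  {in S, forall z, act z \in S} ->
  actmx S act *m mx_of S S' F = mx_of S S' (fun z w => F (act z) w).
Proof.
move=> aS; apply/matrixP=> i j; rewrite !mxE.
rewrite (eq_bigr (fun i2 => (act (enum_val i) == enum_val i2)%:R * F (enum_val i2) (enum_val j))); last first.
  by move=> i2 _; rewrite !mxE.
by rewrite -(big_enum_val (A := mem S) (fun w => (act (enum_val i) == w)%:R * F w (enum_val j))) /= sum_pick // aS // enum_valP.
Qed.

Lemma mx_of_actmx (T T' : finType) (S : {set T}) (S' : {set T'}) act inv F :
  {in S', forall w, inv w \in S'} -> (forall x w, (act x == w) = (x == inv w)) ->
  mx_of S S' F *m actmx S' act = mx_of S S' (fun z w => F z (inv w)).
Proof.
move=> iS hinv; apply/matrixP=> i j; rewrite !mxE.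
rewrite (eq_bigr (fun i2 => (inv (enum_val j) == enum_val i2)%:R * F (enum_val i) (enum_val i2))); last first.
  by move=> i2 _; rewrite !mxE hinv eq_sym mulrC.
by rewrite -(big_enum_val (A := mem S') (fun w => (inv (enum_val j) == w)%:R * F (enum_val i) w)) /= sum_pick // iS // enum_valP.
Qed.

Lemma mx_of_mul (T T' T'' : finType) (S : {set T}) (S' : {set T'}) (S'' : {set T''}) F F' :
  mx_of S S' F *m mx_of S' S'' F' = mx_of S S'' (fun z u => \sum_(w in S') F z w * F' w u).
Proof.
apply/matrixP=> i j; rewrite !mxE.
rewrite (big_enum_val (A := mem S') (fun w => F (enum_val i) w * F' w (enum_val j))) /=.
by apply: eq_bigr => k _; rewrite !mxE.
Qed.

Lemma mx_of_eq (T T' : finType) (S : {set T}) (S' : {set T'}) F F' :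
  {in S & S', forall z w, F z w = F' z w} -> mx_of S S' F = mx_of S S' F'.
Proof. by move=> h; apply/matrixP=> i j; rewrite !mxE h ?enum_valP. Qed.

Lemma mx_of1 (T : finType) (S : {set T}) : mx_of S S (fun z w => (z == w)%:R) = 1%:M.
Proof.
by apply/matrixP=> i j; rewrite !mxE (inj_eq enum_val_inj).
Qed.

Section Summand.
Variables (gT : finGroupType) (H : {group gT}).
Variables (T T' : finType) (S : {set T}) (S' : {set T'}).
Variables (l : gT -> T -> T) (r : T -> gT -> T) (l' : gT -> T' -> T') (r' : T' -> gT -> T').
Hypotheses (l1 : forall z, l 1%g z = z) (lM : forall a b z, l (a * b)%g z = l a (l b z)).
Hypotheses (r1 : forall z, r z 1%g = z) (rM : forall a b z, r z (a * b)%g = r (r z a) b).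
Hypothesis (lr : forall a b z, l a (r z b) = r (l a z) b).
Hypotheses (l1' : forall z, l' 1%g z = z) (lM' : forall a b z, l' (a * b)%g z = l' a (l' b z)).
Hypotheses (r1' : forall z, r' z 1%g = z) (rM' : forall a b z, r' z (a * b)%g = r' (r' z a) b).
Hypothesis (lr' : forall a b z, l' a (r' z b) = r' (l' a z) b).
Hypotheses (lS : forall a z, a \in H -> z \in S -> l a z \in S)
           (rS : forall a z, a \in H -> z \in S -> r z a \in S).
Hypotheses (lS' : forall a z, a \in H -> z \in S' -> l' a z \in S')
           (rS' : forall a z, a \in H -> z \in S' -> r' z a \in S').
Variables (y0 : T') (x0 : T).
Hypotheses (y0S : y0 \in S') (x0S : x0 \in S).
Hypothesis free : forall a b, a \in H -> b \in H -> l' a (r' y0 b) = y0 -> a = 1%g /\ b = 1%g.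

Let act a b x := r (l a x) b.
Let act' a b y := r' (l' a y) b.

Lemma linv a z : l a^-1%g (l a z) = z. Proof. by rewrite -lM mulVg l1. Qed.
Lemma linv' a z : l' a^-1%g (l' a z) = z. Proof. by rewrite -lM' mulVg l1'. Qed.
Lemma linvV a z : l a (l a^-1%g z) = z. Proof. by rewrite -lM mulgV l1. Qed.
Lemma linvV' a z : l' a (l' a^-1%g z) = z. Proof. by rewrite -lM' mulgV l1'. Qed.
Lemma rinv a z : r (r z a) a^-1%g = z. Proof. by rewrite -rM mulgV r1. Qed.
Lemma rinv' a z : r' (r' z a) a^-1%g = z. Proof. by rewrite -rM' mulgV r1'. Qed.
Lemma rinvV a z : r (r z a^-1%g) a = z. Proof. by rewrite -rM mulVg r1. Qed.
Lemma rinvV' a z : r' (r' z a^-1%g) a = z. Proof. by rewrite -rM' mulVg r1'. Qed.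

Lemma leq_l a u z : (l a u == z) = (u == l a^-1%g z).
Proof. by apply/eqP/eqP => [<-|->]; rewrite ?linv ?linvV. Qed.
Lemma leq_l' a u z : (l' a u == z) = (u == l' a^-1%g z).
Proof. by apply/eqP/eqP => [<-|->]; rewrite ?linv' ?linvV'. Qed.
Lemma req_r a u z : (r u a == z) = (u == r z a^-1%g).
Proof. by apply/eqP/eqP => [<-|->]; rewrite ?rinv ?rinvV. Qed.
Lemma req_r' a u z : (r' u a == z) = (u == r' z a^-1%g).
Proof. by apply/eqP/eqP => [<-|->]; rewrite ?rinv' ?rinvV'. Qed.

Definition Nc x z w : algC :=
  \sum_(a in H) \sum_(b in H) ((act a b x == z) && (act' a b y0 == w))%:R.

Lemma sum_reindexl (F : gT -> algC) c : c \in H ->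
  \sum_(a in H) F a = \sum_(a in H) F (c * a)%g.
Proof.
move=> cH; rewrite (reindex_inj (mulgI c)) /=.
by apply: eq_bigl => a; rewrite groupMl.
Qed.

Lemma sum_reindexr (F : gT -> algC) c : c \in H ->
  \sum_(a in H) F a = \sum_(a in H) F (a * c)%g.
Proof.
move=> cH; rewrite (reindex_inj (mulIg c)) /=.
by apply: eq_bigl => a; rewrite groupMr.
Qed.

Lemma NcL x c z w : c \in H -> Nc x (l c z) w = Nc x z (l' c^-1%g w).
Proof.
move=> cH; rewrite /Nc (sum_reindexl _ cH); apply: eq_bigr => a aH.
apply: eq_bigr => b bH; rewrite /act /act' lM lM'.
by rewrite -(lr c) -(lr' c) leq_l leq_l' linv.
Qed.

Lemma NcR x c z w : c \in H -> Nc x (r z c) w = Nc x z (r' w c^-1%g).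
Proof.
move=> cH; rewrite /Nc; apply: eq_bigr => a aH.
rewrite (sum_reindexr _ cH); apply: eq_bigr => b bH.
by rewrite /act /act' rM rM' req_r req_r' rinv.
Qed.


Lemma freeP a b a' b' : a \in H -> b \in H -> a' \in H -> b' \in H ->
  (act' a' b' y0 == act' a b y0) = (a == a') && (b == b').
Proof.
move=> aH bH a'H b'H; apply/eqP/andP => [e|[/eqP-> /eqP->]] //.
have : l' (a^-1 * a')%g (r' y0 (b' * b^-1)%g) = y0.
  by rewrite lM' rM' (lr' a') (lr' a') -/(act' a' b' y0) e /act' rinv' linv'.
case/free; rewrite ?groupM ?groupV // => e1 e2; split.
  by rewrite -[a']mul1g -(mulgV a) -mulgA e1 mulg1.
by rewrite -[b']mulg1 -(mulVg b) mulgA e2 mul1g.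
Qed.

Lemma Nfree x z a b : a \in H -> b \in H ->
  Nc x z (act' a b y0) = (act a b x == z)%:R.
Proof.
move=> aH bH; rewrite /Nc (eq_bigr (fun a' => (a == a')%:R *
   \sum_(b' in H) (b == b')%:R * (act a' b' x == z)%:R)); last first.
  move=> a' a'H; rewrite mulr_sumr; apply: eq_bigr => b' b'H.
  rewrite freeP //.
  by case: (a == a'); case: (b == b'); case: (act a' b' x == z); rewrite /= ?mul1r ?mul0r ?andbF.
by rewrite sum_pick // sum_pick.
Qed.

Lemma Nsum z z' : z \in S -> z' \in S ->
  \sum_(x in S) \sum_(w in S') Nc x z w * Nc x z' w
    = (#|H| * #|H|)%:R * (z == z')%:R.
Proof.
move=> zS z'S.
transitivity (\sum_(x in S) \sum_(a in H) \sum_(b in H)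
                 ((act a b x == z)%:R * (act a b x == z')%:R : algC)).
  apply: eq_bigr => x xS.
  rewrite (eq_bigr (fun w => \sum_(a in H) \sum_(b in H)
        (act' a b y0 == w)%:R * ((act a b x == z)%:R * Nc x z' w))); last first.
    move=> w wS; rewrite /Nc mulr_suml; apply: eq_bigr => a aH.
    rewrite mulr_suml; apply: eq_bigr => b bH.
    by case: (act' a b y0 == w); case: (act a b x == z); rewrite /= ?mul1r ?mul0r.
  rewrite exchange_big; apply: eq_bigr => a aH.
  rewrite exchange_big; apply: eq_bigr => b bH.
  by rewrite sum_pick ?Nfree //; rewrite /act' rS' ?lS'.
rewrite exchange_big /=.
rewrite (eq_bigr (fun a => \sum_(b in H) ((z == z')%:R : algC))); last first.
  move=> a aH; rewrite exchange_big; apply: eq_bigr => b bH.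
  have ue : forall x, (act a b x == z) = (l a^-1%g (r z b^-1%g) == x).
    by move=> x; rewrite /act req_r leq_l eq_sym.
  rewrite (eq_bigr (fun x => (l a^-1%g (r z b^-1%g) == x)%:R * (act a b x == z')%:R)); last first.
    by move=> x _; rewrite ue.
  by rewrite sum_pick /act ?linvV ?rinvV // lS ?rS ?groupV.
by rewrite sumr_const sumr_const -mulrnA mulr_natl.
Qed.

Definition fmx x := mx_of S S' (fun z w => ((#|H| * #|H|)%:R)^-1 * Nc x z w).
Definition pmx x := mx_of S' S (fun w z => Nc x z w).

Theorem summand_free : is_summand_of_copies H H S l r S' l' r' #|S|.
Proof.
exists (fun j => fmx (enum_val j)), (fun j => pmx (enum_val j)); split.
- move=> j; split => c cH.
    rewrite /fmx actmx_mx_of; last by move=> z zS; apply: lS.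
    rewrite (@mx_of_actmx _ _ _ _ _ (l' c^-1%g)); last by exact: leq_l'.
      by apply: mx_of_eq => z w _ _; rewrite NcL.
    by move=> w wS; rewrite lS' ?groupV.
  rewrite /fmx actmx_mx_of; last by move=> z zS; apply: rS.
  rewrite (@mx_of_actmx _ _ _ _ _ (fun w => r' w c^-1%g)); last by exact: req_r'.
    by apply: mx_of_eq => z w _ _; rewrite NcR.
  by move=> w wS; rewrite rS' ?groupV.
- move=> j; split => c cH.
    rewrite /pmx actmx_mx_of; last by move=> z zS; apply: lS'.
    rewrite (@mx_of_actmx _ _ _ _ _ (l c^-1%g)); last by exact: leq_l.
      apply: mx_of_eq => w z _ _.
      by have := NcL (enum_val j) (l c^-1%g z) (l' c w) cH; rewrite linvV linv'.
    by move=> w wS; rewrite lS ?groupV.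
  rewrite /pmx actmx_mx_of; last by move=> z zS; apply: rS'.
  rewrite (@mx_of_actmx _ _ _ _ _ (fun w => r w c^-1%g)); last by exact: req_r.
    apply: mx_of_eq => w z _ _.
    by have := NcR (enum_val j) (r z c^-1%g) (r' w c) cH; rewrite rinvV rinv'.
  by move=> w wS; rewrite rS ?groupV.
- rewrite -mx_of1.
  transitivity (mx_of S S (fun z z' => \sum_(j < #|S|) \sum_(w in S')
       ((#|H| * #|H|)%:R)^-1 * Nc (enum_val j) z w * Nc (enum_val j) z' w)).
    apply/matrixP => i i'; rewrite summxE !mxE; apply: eq_bigr => j _.
    by rewrite /fmx /pmx mx_of_mul !mxE.
  apply: mx_of_eq => z z' zS z'S.
  rewrite -(big_enum_val (A := mem S) (fun x => \sum_(w in S')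
       ((#|H| * #|H|)%:R)^-1 * Nc x z w * Nc x z' w)) /=.
  rewrite (eq_bigr (fun x => ((#|H| * #|H|)%:R)^-1 * \sum_(w in S') Nc x z w * Nc x z' w)); last first.
    by move=> x _; rewrite mulr_sumr; apply: eq_bigr => w _; rewrite mulrA.
  rewrite -mulr_sumr Nsum // mulKf // pnatr_eq0 -lt0n muln_gt0 andbb.
  by apply/card_gt0P; exists 1%g; rewrite group1.
Qed.

Lemma summand_free_pos : (0 < #|S|)%N.
Proof. by apply/card_gt0P; exists x0. Qed.

End Summand.

End Part2.

Section Part3.
Local Open Scope ring_scope.

Lemma summand_annih (gT : finGroupType) (A B : {set gT})
  (T : finType) (S : {set T}) (lS : gT -> T -> T) (rS : T -> gT -> T)
  (T' : finType) (S' : {set T'}) (lS' : gT -> T' -> T') (rS' : T' -> gT -> T')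
  k (Z : 'M[algC]_#|S|) (Z' : 'M[algC]_#|S'|) :
  is_summand_of_copies A B S lS rS S' lS' rS' k ->
  (forall M, is_bihom A B lS rS lS' rS' M -> Z *m M = M *m Z') -> Z' = 0 -> Z = 0.
Proof.
case=> f [p] [fh _ e] hZ Z'0.
rewrite -[Z]mulmx1 -e mulmx_sumr big1 // => j _.
by rewrite mulmxA hZ // Z'0 mulmx0 mul0mx.
Qed.

Lemma sum_eq_in (U : finType) (D : {pred U}) (u : U) :
  \sum_(y in D) ((u == y)%:R : algC) = (u \in D)%:R.
Proof.
case: (boolP (u \in D)) => uD.
  rewrite (eq_bigr (fun y => (u == y)%:R * (fun _ => (1 : algC)) y)).
    by rewrite sum_pick.
  by move=> y _; rewrite mulr1.
by rewrite big1 // => y yD; case: eqP => // e; rewrite e yD in uD.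
Qed.

Lemma classJ_in (gT : finGroupType) (H : {group gT}) (h x y : gT) :
  y \in H -> (x ^ y \in h ^: H)%g = (x \in h ^: H)%g.
Proof.
have aux : forall x y, y \in H -> (x \in h ^: H)%g -> (x ^ y \in h ^: H)%g.
  move=> x' y' yH /imsetP[z zH ->]; by rewrite -conjgM; apply: memJ_class; rewrite groupM.
move=> yH; apply/idP/idP; last exact: aux.
by move/(aux _ y^-1%g); rewrite groupV conjgK; apply.
Qed.

Lemma eqlm (gT : finGroupType) (y a b : gT) : (y * a == b)%g = (b * a^-1 == y)%g.
Proof. by apply/eqP/eqP => [<-|<-]; rewrite ?mulgK ?mulgKV. Qed.
Lemma eqrm (gT : finGroupType) (y a b : gT) : (a * y == b)%g = (a^-1 * b == y)%g.
Proof. by apply/eqP/eqP => [<-|<-]; rewrite ?mulKg ?mulKVg. Qed.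

Section Depth1.
Variables (gT : finGroupType) (G H : {group gT}).
Local Open Scope group_scope.

Lemma no_depth1 h g : H \subset G -> h \in H -> g \in G -> h ^ g \notin H ->
  forall k, ~ is_summand_of_copies H H G (@lmulg gT) (@rmulg gT) H (@lmulg gT) (@rmulg gT) k.
Proof.
move=> sHG hH gG hgH k hs.
pose D := h ^: H.
have sDH : D \subset H by apply: class_subG.
pose Z := (\sum_(y in D) (actmx G (@lmulg gT y) - actmx G (@rmulg gT ^~ y)))%R.
pose Z' := (\sum_(y in D) (actmx H (@lmulg gT y) - actmx H (@rmulg gT ^~ y)))%R.
have hG : h * g \in G by rewrite groupM // (subsetP sHG).
have Znz : Z <> 0.
  move/matrixP/(_ (enum_rank_in gG g) (enum_rank_in gG (h * g))).
  rewrite !mxE summxE (eq_bigr (fun y => ((((h * g) * g^-1)%g == y)%:R - ((g^-1 * (h * g))%g == y)%:R)%R)).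
rewrite sumrB !sum_eq_in mulgK class_refl.
    rewrite (_ : g^-1 * (h * g) \in D = false) ?subr0; first by move/eqP; rewrite oner_eq0.
    by apply/negbTE/negP => /(subsetP sDH); rewrite -conjgE (negPf hgH).
  by move=> y _; rewrite !mxE !enum_rankK_in // /lmulg /rmulg eqlm (eqrm y).
apply: Znz; apply: (summand_annih (Z' := Z') hs).
  move=> M [hl hr]; rewrite /Z /Z' mulmx_suml mulmx_sumr; apply: eq_bigr => y yD.
  have yH := subsetP sDH y yD.
  by rewrite mulmxBl mulmxBr hl // hr.
apply/matrixP => i j; rewrite summxE !mxE.
rewrite (eq_bigr (fun y => (((enum_val j * (enum_val i)^-1)%g == y)%:R -
                   (((enum_val i)^-1 * enum_val j)%g == y)%:R)%R)).
  rewrite sumrB !sum_eq_in.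
  have -> : (enum_val i)^-1 * enum_val j = (enum_val j * (enum_val i)^-1) ^ (enum_val i).
    by rewrite conjgE mulgKV.
  by rewrite classJ_in ?subrr // (enum_valP i).
by move=> y _; rewrite !mxE /lmulg /rmulg eqlm (eqrm y).
Qed.

End Depth1.

Lemma actmx_mx (T : finType) (S : {set T}) act :
  actmx S act = mx_of S S (fun z w => (act z == w)%:R).
Proof. by []. Qed.

Section Depth2.
Variables (gT : finGroupType) (G H : {group gT}).
Hypothesis sHG : H \subset G.

Lemma tclass1 (t : {ffun 'I_1 -> gT}) : tclass H t = [set t].
Proof.
apply/setP => u; rewrite inE; apply/imsetP/eqP => [[k kT ->]|->].
  move: kT; rewrite inE => /and3P[/eqP k0 /eqP km _].
  apply/ffunP => i; rewrite ffunE.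
  have -> : widen_ord (leqnSn 1) i = ord0 by apply: val_inj; rewrite /= (ord1 i).
  have -> : lift ord0 i = ord_max by apply: val_inj; rewrite /= (ord1 i).
  by rewrite k0 km invg1 mul1g mulg1.
by exists [ffun _ => 1%g]; rewrite ?twisters1 ?twist1.
Qed.

Lemma eqI1 (u v : {ffun 'I_1 -> gT}) : (u == v) = (u ord0 == v ord0).
Proof. by apply/eqP/eqP => [->|e] //; apply/ffunP=> i; rewrite (ord1 i). Qed.

Lemma tpow1P (z : {set {ffun 'I_1 -> gT}}) : z \in tpow G H 1 -> exists2 t : {ffun 'I_1 -> gT}, t ord0 \in G & z = [set t].
Proof.
case/imsetP => t; rewrite inE => /forallP tB ->; exists t => //.
by rewrite tclass1.
Qed.

Lemma count1_l (z w : {set {ffun 'I_1 -> gT}}) : z \in tpow G H 1 -> w \in tpow G H 1 ->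
  \sum_(g in G) ((tpow_l g z == w)%:R : algC) = 1.
Proof.
case/tpow1P => t tG ->; case/tpow1P => t' t'G ->.
rewrite (eq_bigr (fun g => ((t' ord0 * (t ord0)^-1)%g == g)%:R)).
  by rewrite sum_eq_in groupM ?groupV.
move=> g _; rewrite /tpow_l imset_set1 (inj_eq set1_inj) eqI1 ffunE /=.
by rewrite eqlm.
Qed.

Lemma count1_lr (z w : {set {ffun 'I_1 -> gT}}) h : h \in H -> z \in tpow G H 1 -> w \in tpow G H 1 ->
  \sum_(g in G) ((tpow_r (tpow_l g z) h == w)%:R : algC) = 1.
Proof.
move=> hH; case/tpow1P => t tG ->; case/tpow1P => t' t'G ->.
rewrite (eq_bigr (fun g => ((t' ord0 * (t ord0 * h)^-1)%g == g)%:R)).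
  by rewrite sum_eq_in groupM ?groupV // groupM // (subsetP sHG).
move=> g _; rewrite /tpow_l /tpow_r !imset_set1 (inj_eq set1_inj) eqI1 !ffunE /=.
by rewrite -[(g * _ * h)%g]mulgA eqlm invgK.
Qed.

Lemma no_depth2 yy h : yy \in G -> h \in H -> h \notin (H :^ yy)%g ->
  forall k, ~ is_summand_of_copies G H
       (tpow G H 2) (@tpow_l gT 2) (@tpow_r gT 2)
       (tpow G H 1) (@tpow_l gT 1) (@tpow_r gT 1) k.
Proof.
move=> yyG hH hnot k hs.
pose A2 := \sum_(g in G) actmx (tpow G H 2) (@tpow_l gT 2 g).
pose A1 := \sum_(g in G) actmx (tpow G H 1) (@tpow_l gT 1 g).
pose R2 := actmx (tpow G H 2) ((@tpow_r gT 2)^~ h).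
pose R1 := actmx (tpow G H 1) ((@tpow_r gT 1)^~ h).
pose Z := A2 *m (1%:M - R2).
pose Z' := A1 *m (1%:M - R1).
have hG := subsetP sHG h hH.
have lS2 : forall g, g \in G -> {in tpow G H 2, forall z, tpow_l g z \in tpow G H 2}.
  by move=> g gG z zS; apply: tpow_lS.
have lS1 : forall g, g \in G -> {in tpow G H 1, forall z, tpow_l g z \in tpow G H 1}.
  by move=> g gG z zS; apply: tpow_lS.
have ZE : forall (m : nat) (A : 'M[algC]_m) (R : 'M[algC]_m) (B : gT -> 'M[algC]_m),
    (\sum_(g in G) B g) *m (1%:M - R) = \sum_(g in G) B g - \sum_(g in G) (B g *m R).
  by move=> m A R B; rewrite mulmxBr mulmx1 mulmx_suml.
have Z'0 : Z' = 0.
  rewrite /Z' /A1 (ZE _ 0) /R1; apply/eqP; rewrite subr_eq0; apply/eqP.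
  apply/matrixP => i j; rewrite !summxE.
  rewrite [in LHS](eq_bigr (fun g => ((tpow_l g (enum_val i) == enum_val j)%:R : algC))); last first.
    by move=> g _; rewrite mxE.
  rewrite [in RHS](eq_bigr (fun g => ((tpow_r (tpow_l g (enum_val i)) h == enum_val j)%:R : algC))); last first.
    move=> g gG; rewrite [X in _ *m X]actmx_mx actmx_mx_of; last exact: lS1.
    by rewrite mxE.
  by rewrite count1_l ?count1_lr ?enum_valP.
pose y : {ffun 'I_2 -> gT} := [ffun i => if val i == 0%N then 1%g else yy].
have yB : y \in tbase G 2.
  by rewrite inE; apply/forallP => i; rewrite ffunE; case: ifP; rewrite ?group1.
pose c := tclass H y.
have cS : c \in tpow G H 2 by apply: imset_f.
have notc : forall g, tpow_r (tpow_l g c) h != c.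
  move=> g; rewrite /c tclass_l tclass_r; apply/eqP => e.
  have := tclass_self H (trmul (tlmul g y) h); rewrite e => /imsetP[kk kT ekk].
  move: (kT); rewrite inE => /and3P[/eqP k0 /eqP km /forallP kH].
  have e0 := congr1 (fun f : {ffun 'I_2 -> gT} => f ord0) ekk.
  have e1 := congr1 (fun f : {ffun 'I_2 -> gT} => f (@ord_max 1)) ekk.
  move: e0 e1; rewrite !ffunE /=.
  have -> : widen_ord (leqnSn 2) ord0 = ord0 by apply: val_inj.
  have -> : lift ord0 (ord0 : 'I_2) = widen_ord (leqnSn 2) (@ord_max 1) by apply: val_inj.
  have -> : lift ord0 (@ord_max 1) = ord_max by apply: val_inj.
  rewrite k0 km invg1 !mulg1 mul1g => eg eyh.
  move: hnot; rewrite -eg in eyh.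
  have -> : h = ((kk (widen_ord (leqnSn 2) ord_max))^-1 ^ yy)%g.
    by rewrite conjgE -eg -eyh mulKg.
  by rewrite memJ_conjg groupV kH.
have Znz : Z <> 0.
  move/matrixP/(_ (enum_rank_in cS c) (enum_rank_in cS c)).
  rewrite /Z /A2 (ZE _ 0) /R2 mxE [in X in X = _]mxE !summxE.
  rewrite (eq_bigr (fun g => ((tpow_l g c == c)%:R : algC))); last first.
    by move=> g _; rewrite mxE !enum_rankK_in.
  rewrite [X in _ - X = _](eq_bigr (fun g => 0)); last first.
    move=> g gG; rewrite [X in _ *m X]actmx_mx actmx_mx_of; last exact: lS2.
    by rewrite mxE !enum_rankK_in // (negPf (notc g)).
  rewrite big1_eq subr0 (bigD1 1%g) //= tpow_l1 eqxx => /eqP.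
  rewrite gt_eqF // ltr_pwDl ?ltr01 //.
  rewrite mxE sumr_ge0 // => g _.
apply: Znz; apply: (summand_annih (Z' := Z') hs) => //.
move=> M [hl hr].
have e1 : (1%:M - R2) *m M = M *m (1%:M - R1) by rewrite mulmxBl mulmxBr mul1mx mulmx1 hr.
have e2 : A2 *m M = M *m A1.
  by rewrite /A2 /A1 mulmx_suml mulmx_sumr; apply: eq_bigr => g gG; exact: hl.
by rewrite /Z /Z' -mulmxA e1 mulmxA e2 mulmxA.
Qed.

End Depth2.

End Part3.

Section Part4.

Lemma card_bigcup_sum (I T : finType) (P : pred I) (F : I -> {set T}) :
  (#|\bigcup_(i | P i) F i| <= \sum_(i | P i) #|F i|)%N.
Proof.
elim/big_rec2: _ => [|i n U _ le]; first by rewrite cards0.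
by rewrite (leq_trans (leq_card_setU _ _).1) ?leq_add2l.
Qed.

Section Count.
Variables (gT : finGroupType) (G H : {group gT}).
Hypothesis sHG : H \subset G.
Local Open Scope group_scope.

Definition Fix x := [set Hy in rcosets H G | (Hy :* x)%g == Hy].

Lemma permcharE x : permchar G H x = #|Fix x|. Proof. by []. Qed.

Lemma rcosetsM C g : g \in G -> C \in rcosets H G -> C :* g \in rcosets H G.
Proof.
move=> gG /rcosetsP[z zG ->]; apply/rcosetsP; exists (z * g); rewrite ?groupM //.
by rewrite rcosetM.
Qed.

Lemma permcharJ x g : g \in G -> permchar G H (x ^ g) = permchar G H x.
Proof.
move=> gG; rewrite !permcharE.
have inj : injective (fun C : {set gT} => C :* g^-1).
  by apply: (can_inj (g := fun C => C :* g)) => C /=; rewrite -rcosetM mulVg rcoset1.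
have -> : Fix x = (fun C => C :* g^-1) @: Fix (x ^ g).
  apply/setP => D; apply/idP/imsetP => [|[C]].
    rewrite inE => /andP[DR /eqP e]; exists (D :* g).
      rewrite inE rcosetsM //=; apply/eqP.
      by rewrite -rcosetM conjgE mulKVg rcosetM e.
    by rewrite -rcosetM mulgV rcoset1.
  rewrite inE => /andP[CR /eqP e] ->; rewrite inE rcosetsM ?groupV //=; apply/eqP.
  rewrite [in RHS]/= -[in RHS]e conjgE -!rcosetM; congr (_ :* _).
  by rewrite !mulgA mulgK.
by rewrite (card_imset _ inj).
Qed.


Lemma indexg_pos : (0 < #|G : H|)%N.
Proof. exact: indexg_gt0. Qed.

Lemma Qsum_sum t : (Qsum G H t * (#|G : H|%:R ^+ t) =
   (\sum_(g in G | prime #[g]) permchar G H g ^ t)%:R)%R.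
Proof.
have n0 : (#|G : H|%:R != 0 :> rat)%R by rewrite pnatr_eq0 -lt0n indexg_pos.
rewrite /Qsum mulr_suml natr_sum !big_mkcondr /=.
pose F := fun g => (if prime #[g] then ((permchar G H g ^ t)%:R : rat) else 0)%R.
rewrite (eq_bigr F); last by move=> g _; rewrite /F; case: ifP.
rewrite classfun.sum_by_classes; last first.
  by move=> g h gG hG; rewrite /F orderJ permcharJ.
apply: eq_bigr => xG _; rewrite /F; case: ifP => _; last by rewrite mulr0.
by rewrite -mulrA -exprMn divfK // natrX.
Qed.

Lemma Qsum_lt1 t : (Qsum G H t < 1)%R ->
  (\sum_(g in G | prime #[g]) #|Fix g| ^ t < #|G : H| ^ t)%N.
Proof.
move=> lt1; rewrite -(ltr_nat rat) -(Qsum_sum t) natrX.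
by rewrite -[X in (_ < X)%R]mul1r ltr_pM2r // exprn_gt0 // ltr0n indexg_pos.
Qed.

Lemma fixH y z : y \in G -> z \in (H :^ y) -> (H :* y) :* z = H :* y.
Proof.
move=> yG /imsetP[w wH ->]; rewrite -rcosetM conjgE mulKVg rcosetM.
by rewrite rcoset_id.
Qed.

Lemma base_exists t : (0 < t)%N -> (Qsum G H t < 1)%R ->
  exists y : 'I_t -> gT, (forall i, y i \in G) /\
     (forall x, x \in G -> (forall i, x \in H :^ y i) -> x = 1).
Proof.
move=> t0 /Qsum_lt1 lt.
pose R := rcosets H G.
have : ~~ ([set w : {ffun 'I_t -> {set gT}} | w \in ffun_on R] \subset
    \bigcup_(g in G | prime #[g]) [set w : {ffun 'I_t -> {set gT}} | w \in ffun_on (Fix g)]).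
  apply/negP => /subset_leq_card; rewrite cardsE card_ffun_on card_ord => le.
  have := leq_trans le (card_bigcup_sum _ _).
  rewrite (eq_bigr (fun g => #|Fix g| ^ t)%N); first by rewrite leqNgt lt.
  by move=> g _; rewrite cardsE card_ffun_on card_ord.
case/subsetPn => w; rewrite inE => wR /bigcupP wnot.
have wi : forall i, w i \in R by move: wR => /ffun_onP.
exists (fun i => repr (w i)); split.
  move=> i; case/rcosetsP: (wi i) => z zG ->.
  have := mem_repr_rcoset H z; case/rcosetP => u uH ->.
  by rewrite groupM // (subsetP sHG).
move=> x xG xin; apply/eqP; apply/negP => /negP xn1.
have p1 : (1 < #[x])%N by rewrite order_gt1.
have [z zx zp] := Cauchy (pdiv_prime p1) (pdiv_dvd #[x]).
apply: wnot; exists z.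
  rewrite zp pdiv_prime // andbT; apply: (subsetP _ _ zx); by rewrite cycle_subG.
rewrite inE.
apply/ffun_onP => i; rewrite inE wi /=; apply/eqP.
case/rcosetsP: (wi i) => y yG wie.
have yrep : H :* repr (w i) = w i by rewrite wie rcoset_repr.
have rG : repr (w i) \in G.
  rewrite wie; have := mem_repr_rcoset H y; case/rcosetP => u uH ->.
  by rewrite groupM // (subsetP sHG).
rewrite -yrep fixH //.
have : <[x]> \subset H :^ repr (w i) by rewrite cycle_subG xin.
by move/subsetP; apply.
Qed.

End Count.

End Part4.

Section Part5.

Section Chain.
Variables (gT : finGroupType) (H : {group gT}).
Local Open Scope group_scope.

Lemma solve_r (x s y w : gT) : x^-1 * s * y = w -> y = s^-1 * x * w.
Proof. by move<-; rewrite !mulgA mulgK mulVg mul1g. Qed.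

Lemma chain (m : nat) (a b : gT) (kk cc : nat -> gT) :
  a \in H -> b \in H -> kk 0 = 1 -> kk m.+1 = 1 -> cc 0 = 1 -> (forall j, kk j \in H) ->
  (forall j, j <= m -> (kk j)^-1 * (cc j * (cc j.+1)^-1) * kk j.+1 =
       (if j == 0 then a else 1) * (cc j * (cc j.+1)^-1) * (if j == m then b else 1)) ->
  (forall j, j <= m.+1 -> cc j * a * (cc j)^-1 \in H) /\
  b^-1 = cc m.+1 * a * (cc m.+1)^-1.
Proof.
move=> aH bH k0 km c0 kH e.
pose K j := if j == 0 then a else kk j.
have KA : forall j, kk j * (if j == 0 then a else 1) = K j.
  by move=> [|j]; rewrite /K /= ?k0 ?mul1g ?mulg1.
have KH : forall j, K j \in H by move=> [|j]; rewrite /K /=.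
have Kc : forall j, j <= m -> K j = cc j * a * (cc j)^-1.
  elim=> [|j IH] jm; first by rewrite /K /= c0 invg1 mul1g mulg1.
  have jm' : j <= m by apply: ltnW.
  have := e j jm'; rewrite (ltn_eqF jm) mulg1 => /solve_r.
  rewrite -mulgA [X in _ * X]mulgA KA IH // /K /= => ->.
  by rewrite !invMg !invgK !mulgA !mulgKV.
have hb : b^-1 = cc m.+1 * a * (cc m.+1)^-1.
  set s := cc m * (cc m.+1)^-1.
  have e' := e m (leqnn m); rewrite eqxx km mulg1 in e'.
  have e2 : s = K m * s * b.
    apply: (mulgI (kk m)^-1); rewrite e' -KA !mulgA mulVg mul1g.
    by rewrite -/s.
  have e3 : s * b^-1 = K m * s by rewrite {1}e2 mulgK.
  have -> : b^-1 = s^-1 * (K m * s) by rewrite -e3 mulKg.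
  by rewrite Kc // /s !invMg !invgK !mulgA !mulgKV.
split=> // j; rewrite leq_eqVlt ltnS => /orP[/eqP->|jm].
  by rewrite -hb groupV.
by rewrite -Kc.
Qed.

End Chain.

Section Free.
Variables (gT : finGroupType) (G H : {group gT}).
Hypothesis sHG : H \subset G.
Variable m : nat.
Variable y : 'I_m.+2 -> gT.
Hypothesis yG : forall i, y i \in G.
Hypothesis ybase : forall x, x \in G -> (forall i, x \in (H :^ y i)%g) -> x = 1%g.
Local Open Scope group_scope.

Definition cy i := y i * (y ord0)^-1.
Definition sy : {ffun 'I_m.+1 -> gT} :=
  [ffun i => cy (widen_ord (leqnSn _) i) * (cy (lift ord0 i))^-1].
Definition y0 := tclass H sy.

Lemma y0S : y0 \in tpow G H m.+1.
Proof.
apply: imset_f.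
rewrite inE; apply/forallP => i; rewrite ffunE /cy.
by apply: groupM; [apply: groupM | rewrite groupV; apply: groupM]; rewrite ?groupV yG.
Qed.

Lemma free_y0 a b : a \in H -> b \in H -> tpow_l a (tpow_r y0 b) = y0 -> a = 1 /\ b = 1.
Proof.
move=> aH bH; rewrite /y0 tclass_r tclass_l => e.
have := tclass_self H (tlmul a (trmul sy b)); rewrite e => /imsetP[k kT ek].
move: kT; rewrite inE => /and3P[/eqP k0 /eqP km /forallP kH].
pose kk j := k (inord j); pose cc j := cy (inord j).
have [hin hb] : (forall j, j <= m.+1 -> cc j * a * (cc j)^-1 \in H) /\
                b^-1 = cc m.+1 * a * (cc m.+1)^-1.
  apply: (@chain _ H m a b kk cc) => //.
  - by rewrite /kk (_ : inord 0 = ord0) //; apply: val_inj; rewrite /= inordK.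
  - by rewrite /kk (_ : inord m.+1 = ord_max) //; apply: val_inj; rewrite /= inordK.
  - by rewrite /cc /cy (_ : inord 0 = ord0) ?mulgV //; apply: val_inj; rewrite /= inordK.
  - by move=> j; apply: kH.
  - move=> j jm; pose i : 'I_m.+1 := inord j.
    have vi : i = j :> nat by rewrite /i inordK.
    have wi : widen_ord (leqnSn _) i = inord j.
      by apply: val_inj; rewrite /= vi inordK // ltnS leqW.
    have li : lift ord0 i = inord j.+1.
      by apply: val_inj; rewrite /= /bump /= vi inordK // ltnS.
    have := congr1 (fun f : {ffun 'I_m.+1 -> gT} => f i) ek.
    have vi2 : \val i = j := vi.
    rewrite !ffunE wi li vi2 /= -/(kk j) -/(kk j.+1) -/(cc j) -/(cc j.+1) => <-.
    by case: (j == 0); case: (j == m); rewrite ?mul1g ?mulg1 ?mulgA.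
have ain : forall i, a \in H :^ cy i.
  move=> i; have := hin i (ltn_ord i); rewrite /cc inord_val => h.
  have -> : a = (cy i * a * (cy i)^-1) ^ cy i by rewrite conjgE mulgKV mulKg.
  by rewrite memJ_conjg.
have a1 : a ^ y ord0 = 1.
  apply: ybase => [|i]; first by rewrite groupJ // (subsetP sHG).
  have -> : y i = cy i * y ord0 by rewrite /cy mulgKV.
  by rewrite conjsgM memJ_conjg ain.
have a_1 : a = 1 by apply/eqP; rewrite -(conjg_eq1 _ (y ord0)) a1.
rewrite a_1 in hb *.
by split=> //; apply/eqP; rewrite -eq_invg1 hb mulg1 mulgV.
Qed.

End Free.

End Part5.

Section Part6.

Section Final.
Variables (gT : finGroupType) (G H : {group gT}).
Hypothesis sHG : H \subset G.
Hypothesis ntH : H != 1%G :> {set gT}.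
Hypothesis cf : \bigcap_(g in G) (H :^ g)%g = 1%g.

Lemma moved h : h \in H -> h != 1%g -> exists2 g, g \in G & h \notin (H :^ g)%g.
Proof.
move=> hH hn1; apply/exists_inP; apply: contraR hn1; rewrite negb_exists_in.
move/forall_inP => hall.
have : h \in \bigcap_(g in G) (H :^ g)%g by apply/bigcapP => g gG; move: (hall g gG); rewrite negbK.
by rewrite cf inE.
Qed.

Lemma depth_from_Q t : (0 < t)%N -> (Qsum G H t < 1)%R ->
  exists m, t = m.+2 /\ has_depth G H (m.+1).*2.+1.
Proof.
move=> t0 /(base_exists sHG t0) [y [yG ybase]].
have [h hH hn1] := trivgPn _ ntH.
case: t t0 y yG ybase => [|[|m]] //= _ y yG ybase.
  have e : (h ^ y ord0)%g = 1%g.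
    apply: ybase => [|i]; first by rewrite groupJ ?yG ?(subsetP sHG).
    by rewrite (ord1 i) memJ_conjg.
  by move: hn1; rewrite -(conjg_eq1 _ (y ord0)) e eqxx.
exists m; split=> //; right; right; exists m.+1; split=> //.
exists #|tpow G H m.+2|.
  apply/card_gt0P; exists (tclass H [ffun _ => 1%g]); apply: imset_f.
  by rewrite inE; apply/forallP => i; rewrite ffunE group1.
apply: (@summand_free gT H _ _ (tpow G H m.+2) (tpow G H m.+1)
  (@tpow_l gT m.+2) (@tpow_r gT m.+2) (@tpow_l gT m.+1) (@tpow_r gT m.+1)
  _ _ _ _ _ _ _ _ _ _ _ _ _ _ (y0 H y)).
all: try (by move=> *; rewrite ?tpow_l1 ?tpow_lM ?tpow_r1 ?tpow_rM ?tpow_lr).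
- by move=> a z aH zS; apply: tpow_lS => //; apply: (subsetP sHG).
- by move=> a z aH zS; apply: tpow_rS.
- by move=> a z aH zS; apply: tpow_lS => //; apply: (subsetP sHG).
- by move=> a z aH zS; apply: tpow_rS.
- exact: y0S.
- move=> a b aH bH.
  exact: (free_y0 sHG yG ybase aH bH).
Qed.

Lemma no_small_depth d : (0 < d < 3)%N -> ~ has_depth G H d.
Proof.
move=> /andP[d0 d3].
have [h hH hn1] := trivgPn _ ntH.
have [g gG hng] := moved hH hn1.
case=> [[d1 [k _ hs]]|[[n [n0 dn [k _ hs]]]|[n [n0 dn _]]]].
- apply: (@no_depth1 gT G H h (g^-1)%g sHG hH (groupVr gG) _ k hs).
  by rewrite -(memJ_conjg H g) conjgKV.
- have n1 : n = 1%N by move: d3; rewrite dn; case: n n0 {dn hs} => [|[|n]].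
  subst n; exact: (no_depth2 sHG gG hH hng hs).
- by move: d3; rewrite dn; case: n n0 {dn} => [|n].
Qed.

End Final.


End Part6.

Theorem proposition2p6 (gT : finGroupType) (G H : {group gT}) :
  H \subset G ->
  H != 1%G :> {set gT} ->
  \bigcap_(g in G) (H :^ g)%g = 1%g ->
  (forall t : nat, (0 < t)%N -> (Qsum G H t < 1)%R ->
     exists2 d : nat, (0 < d <= t.*2.-1)%N & has_depth G H d) /\
  ((Qsum G H 2 < 1)%R ->
     has_depth G H 3 /\ (forall d : nat, (0 < d < 3)%N -> ~ has_depth G H d)).
Proof.
move=> sHG ntH cf; split.
  move=> t t0 /(depth_from_Q sHG ntH t0) [m [-> hd]].
  by exists (m.+1).*2.+1 => //=; rewrite !doubleS.
move=> /(depth_from_Q sHG ntH (isT : (0 < 2)%N)) [m [m0 hd]].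
case: m m0 hd => [|m] //= _ hd; split=> //.
exact: no_small_depth.
Qed.
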